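(* Let $n\in\mathbb{N}$. (i) Let $S$ be a symmetric numerical semigroup and $A\subseteq\{x\in S\mid \frac{\mathrm{F}(S)}{2}<x<\mathrm{F}(S)\}$ with $\#A=n$ such that $S\setminus A$ is a numerical semigroup. Then $\mathrm{l}(S\setminus A)=2n$. (ii) Conversely, for every numerical semigroup $T$ with $\mathrm{l}(T)=2n$ there exist a symmetric numerical semigroup $S$ with $\mathrm{F}(S)=\mathrm{F}(T)$ and a set $A\subseteq\{x\in S\mid \frac{\mathrm{F}(S)}{2}<x<\mathrm{F}(S)\}$ with $\#A=n$ such that $T=S\setminus A$.
   Context: A numerical semigroup is a subset $S\subseteq\mathbb{N}$ closed under addition with $0\in S$ and $\mathbb{N}\setminus S$ finite; $\mathrm{F}(S)=\max(\mathbb{Z}\setminus S)$. $\mathrm{N}(S)=\{s\in S\mid s<\mathrm{F}(S)\}$, $\mathrm{L}(S)=\{x\in\mathbb{N}\setminus S\mid \mathrm{F}(S)-x\notin \mathrm{N}(S)\}$, $\mathrm{l}(S)=\#\mathrm{L}(S)$. A numerical semigroup is irreducible if it is not the intersection of two numerical semigroups properly containing it; symmetric means irreducible with odd Frobenius number. *)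

(* Defs.v *)
From mathcomp Require Import all_boot all_order all_algebra.
Set Implicit Arguments. Unset Strict Implicit. Unset Printing Implicit Defensive.
Import Order.TTheory GRing.Theory Num.Theory.
Local Open Scope ring_scope.

Definition numerical_semigroup (S : pred nat) : Prop :=
  S 0%N /\ (forall x y : nat, S x -> S y -> S (x + y)%N) /\
  exists m : nat, forall x : nat, (m <= x)%N -> S x.

(* f = F(S) = max (Z \ S).  Negative integers are never in S, so this says:
   f >= -1, every natural number > f is in S, and f is not in S when f >= 0. *)
Definition is_frob (S : pred nat) (f : int) : Prop :=
  -1 <= f /\ (forall x : nat, f < x%:Z -> S x) /\ (0 <= f -> ~~ S `|f|%N).

Definition Nset (S : pred nat) (f : int) (z : int) : bool :=
  (0 <= z) && S `|z|%N && (z < f).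

Definition Lset (S : pred nat) (f : int) : pred nat :=
  fun x => ~~ S x && ~~ Nset S f (f - x%:Z).

Definition card_eq (P : pred nat) (k : nat) : Prop :=
  exists s : seq nat, [/\ uniq s, (forall x, (x \in s) = P x) & size s = k].

Definition ns_irreducible (S : pred nat) : Prop :=
  numerical_semigroup S /\
  ~ (exists S1 S2 : pred nat,
       [/\ numerical_semigroup S1, numerical_semigroup S2,
           (forall x, S x -> S1 x) /\ (exists x, S1 x && ~~ S x),
           (forall x, S x -> S2 x) /\ (exists x, S2 x && ~~ S x)
         & forall x, S x = S1 x && S2 x]).

Definition ns_symmetric (S : pred nat) : Prop :=
  ns_irreducible S /\ forall f, is_frob S f -> odd `|f|%N.

Definition setminus (S A : pred nat) : pred nat := fun x => S x && ~~ A x.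

(* Main.v *)
Require Import Defs.
From mathcomp Require Import all_boot all_order all_algebra zify.
Import Order.TTheory GRing.Theory Num.Theory.
Local Open Scope ring_scope.
Set Implicit Arguments. Unset Strict Implicit.
Lemma frob_cases (S : pred nat) (f : int) : S 0%N -> is_frob S f ->
  (f = -1 /\ forall x, S x) \/ exists G : nat, [/\ f = G%:Z, (forall x, (G < x)%N -> S x) & ~~ S G].
Proof.
move=> S0 [H1 [H2 H3]].
case: f H1 H2 H3 => [G|k] H1 H2 H3.
  right; exists G; split.
  - by [].
  - by move=> x Hx; apply: H2; rewrite ltz_nat.
  - by apply: H3.
left.
have -> : k = 0%N by move: H1; lia.
by split => // x; apply: H2; lia.
Qed.
Lemma frob_pos (S : pred nat) G : (forall x, (G < x)%N -> S x) -> ~~ S G -> is_frob S G%:Z.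
Proof. move=> H1 H2; split; first by lia. split; last by []. by move=> x; rewrite ltz_nat; apply H1. Qed.
Lemma frob_m1 (S : pred nat) : (forall x, S x) -> is_frob S (-1).
Proof. move=> H; split => //; split => //. Qed.
Lemma Lset_pos (T : pred nat) G x : T 0%N -> (forall x, (G < x)%N -> T x) -> ~~ T G -> Lset T G%:Z x = ~~T x && ~~T (G - x)%N.
Proof.
move=> T0 H1 H2; rewrite /Lset /Nset.
case Tx: (T x) => //=.
have xG : (x <= G)%N. by case: (leqP x G) => // /H1; rewrite Tx.
have x0 : (0 < x)%N. by case: x Tx {xG} => //; rewrite T0.
have -> : G%:Z - x%:Z = (G - x)%N%:Z by rewrite subzn.
rewrite ltz_nat /=. have -> : (G - x < G)%N by lia. by rewrite andbT.
Qed.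
Lemma frob_uniq (S : pred nat) G G' : (forall x, (G < x)%N -> S x) -> ~~ S G ->
  (forall x, (G' < x)%N -> S x) -> ~~ S G' -> G = G'.
Proof.
move=> H1 H2 H3 H4; case: (ltngtP G G') => // E.
  by move: H4; rewrite H1.
by move: H2; rewrite H3.
Qed.

Lemma frob_eq (S : pred nat) f G : S 0%N -> is_frob S f -> (forall x, (G < x)%N -> S x) -> ~~ S G -> f = G%:Z.
Proof.
move=> S0 Hf H1 H2; case: (frob_cases S0 Hf) => [[_ all]|[G' [-> H3 H4]]].
  by move: H2; rewrite all.
by rewrite (frob_uniq H3 H4 H1 H2).
Qed.

Lemma gap_le (S : pred nat) G x : (forall x, (G < x)%N -> S x) -> ~~ S x -> (x <= G)%N.
Proof. by move=> H Hx; case: (leqP x G) => // /H; rewrite (negbTE Hx). Qed.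

Lemma irr_sym (S : pred nat) G : ns_irreducible S -> (forall x, (G < x)%N -> S x) -> ~~ S G -> odd G ->
  forall x, (x <= G)%N -> ~~ S x -> S (G - x)%N.
Proof.
move=> [[S0 [Sadd [m Sm]]] Hirr] H1 H2 oddG x0 x0G Sx0.
apply/negPn/negP => Sx0'.
pose P := fun h => [&& (h <= G)%N, ~~ S h & ~~ S (G - h)%N].
have exP : exists i, P i by exists x0; rewrite /P x0G Sx0 Sx0'.
have ubP : forall i, P i -> (i <= G)%N by move=> i /and3P[].
case: (ex_maxnP exP ubP) => h /and3P[hG Sh Sh'] hmax.
have h0 : (0 < h)%N by case: h {hG hmax} Sh Sh'; rewrite ?S0.
have hG' : (h < G)%N.
  rewrite ltn_neqAle hG andbT; apply/eqP => E; move: Sh'; by rewrite E subnn S0.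
have Gh : G != (2 * h)%N by apply/eqP => E; move: oddG; rewrite E mul2n odd_double.
have h2 : (G < 2 * h)%N.
  case: (ltnP G (2 * h)) => // E.
  have : P (G - h)%N by rewrite /P leq_subr Sh' subKn.
  move/hmax; move: Gh E; lia.
apply: Hirr.
exists (fun x => S x || (x == h)), (fun x => S x || (x == G)).
have key1 : forall y, S y -> S (h + y)%N || (h + y == h)%N.
  move=> y Sy; case: y Sy => [|y] Sy; first by rewrite addn0 eqxx orbT.
  case E: (S (h + y.+1)%N) => //=.
  have le : (h + y.+1 <= G)%N by apply: (gap_le H1); rewrite E.
  have : P (h + y.+1)%N.
    rewrite /P le E /=; apply/negP => S3; move: Sh'.
    have -> : (G - h = (G - (h + y.+1)) + y.+1)%N by lia.
    by rewrite Sadd.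
  by move/hmax; lia.
have key2 : forall y, S y -> S (G + y)%N || (G + y == G)%N.
  move=> y Sy; case: y Sy => [|y] Sy; first by rewrite addn0 eqxx orbT.
  by rewrite H1 //; lia.
split.
- split; first by rewrite S0.
  split; last by exists m => x /Sm ->.
  move=> x y /orP[Sx|/eqP->] /orP[Sy|/eqP->].
  + by rewrite Sadd.
  + by rewrite addnC key1.
  + by rewrite key1.
  + by rewrite H1 //; lia.
- split; first by rewrite S0.
  split; last by exists m => x /Sm ->.
  move=> x y /orP[Sx|/eqP->] /orP[Sy|/eqP->].
  + by rewrite Sadd.
  + by rewrite addnC key2.
  + by rewrite key2.
  + by rewrite H1 //; lia.
- split; first by move=> x ->.
  by exists h; rewrite eqxx orbT Sh.
- split; first by move=> x ->.
  by exists G; rewrite eqxx orbT H2.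
- move=> x; case Sx: (S x) => //=.
  apply/esym/negP => /andP[/eqP E1 /eqP E2]; move: hG'; lia.
Qed.

Lemma sym_irr (S : pred nat) G : numerical_semigroup S -> (forall x, (G < x)%N -> S x) -> ~~ S G ->
  (forall x, (x <= G)%N -> ~~ S x -> S (G - x)%N) -> ns_irreducible S.
Proof.
move=> nsS H1 H2 Hsym; split => //.
move=> [S1 [S2 [ns1 ns2 [inc1 ex1] [inc2 ex2] E]]].
have k : forall S' : pred nat, numerical_semigroup S' -> (forall x, S x -> S' x) ->
    (exists x, S' x && ~~ S x) -> S' G.
  move=> S' [_ [S'add _]] inc [x /andP[S'x Sx]].
  have xG := gap_le H1 Sx.
  have := S'add _ _ S'x (inc _ (Hsym _ xG Sx)).
  by rewrite subnKC.
by move: H2; rewrite E (k _ ns1 inc1 ex1) (k _ ns2 inc2 ex2).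
Qed.

Lemma part1 (n : nat) (S A : pred nat) (f : int) :
     ns_symmetric S -> is_frob S f ->
     (forall x : nat, A x -> [&& (S x), (f < (2 * x)%N%:Z) & (x%:Z < f)]) ->
     card_eq A n ->
     numerical_semigroup (setminus S A) ->
     forall g : int, is_frob (setminus S A) g ->
       card_eq (Lset (setminus S A) g) (2 * n)%N.
Proof.
move=> [Sirr Sodd] Sf HA [s [us ms ss]] nsT g Tg.
have S0 : S 0%N by case: Sirr => [[]].
have T0 : setminus S A 0%N by case: nsT.
case: (frob_cases S0 Sf) => [[fE allS]|[F [fE H1 H2]]].
  have nA : forall x, ~~ A x.
    move=> x; apply/negP => /HA /and3P[_ h1 h2]; move: h1 h2; rewrite fE; lia.
  have s0 : s = [::].
    by case: s us ms ss => [|a s'] // _ ms _; move: (nA a); rewrite -ms mem_head.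
  exists [::]; split => //.
    move=> x; rewrite /Lset /setminus allS (negbTE (nA x)) //.
  by rewrite -ss s0.
subst f.
have oddF : odd F by have := Sodd _ Sf.
have sym := irr_sym Sirr H1 H2 oddF.
have HA' : forall x, A x -> [/\ S x, (F < 2 * x)%N & (x < F)%N].
  by move=> x /HA; rewrite !ltz_nat => /and3P[].
have T1 : forall x, (F < x)%N -> setminus S A x.
  move=> x Fx; rewrite /setminus H1 //=; apply/negP => /HA'[_ _]; lia.
have T2 : ~~ setminus S A F by rewrite /setminus (negbTE H2).
rewrite (frob_eq T0 Tg T1 T2).
have key : forall x, Lset (setminus S A) F x = A x || A (F - x)%N.
  move=> x; rewrite (Lset_pos x T0 T1 T2) /setminus.
  apply/idP/idP.
  - case Ax: (A x) => //= /andP[Sx SFx].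
    rewrite /= andbT in Sx.
    have xF : (x <= F)%N by apply: (gap_le H1).
    move: SFx; rewrite (sym _ xF Sx) /=; by move/negPn.
  - have Sadd := proj1 (proj2 (proj1 Sirr)).
    case/orP => Ax.
      have [Sx h1 h2] := HA' _ Ax.
      rewrite Sx Ax /=.
      apply/negP => /andP[SF _]; move: H2.
      by rewrite -(subnK (ltnW h2)) Sadd.
    have [Sx h1 h2] := HA' _ Ax.
    have xF : (x < F)%N by move: h2; case: (ltnP x F) => //; lia.
    rewrite Ax /= andbF andbT.
    have nAx : ~~ A x by apply/negP => /HA' [_ c1 c2]; move: h1 c1; lia.
    rewrite nAx andbT.
    apply/negP => Sx'; move: H2.
    by rewrite -(subnK (ltnW xF)) Sadd.
exists (s ++ map (fun x => F - x)%N s); split.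
- rewrite cat_uniq us /= map_inj_in_uniq ?us ?andbT.
    apply/hasPn => y /mapP[x xs ->]; rewrite ms; apply/negP => Ay.
    move: (HA' _ Ay) (HA' x); rewrite -ms => [[_ a1 a2]] /(_ xs) [_ b1 b2]; lia.
  move=> x y xs ys E; move: (HA' x) (HA' y); rewrite -!ms => /(_ xs) [_ _ a] /(_ ys) [_ _ b].
  by rewrite -(subKn (ltnW a)) E subKn // ltnW.
- move=> x; rewrite key mem_cat ms; congr (_ || _).
  apply/mapP/idP => [[y ys ->]|Ax].
    move: (HA' y); rewrite -ms => /(_ ys) [_ _ b].
    by rewrite subKn ?(ltnW b) // -ms.
  exists (F - x)%N; first by rewrite ms.
  have [_ a _] := HA' _ Ax.
  rewrite subKn //; move: a; lia.
- by rewrite size_cat size_map ss; lia.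
Qed.

Lemma count3 (G : nat) (t : seq nat) :
  size t = (count (fun x => G < 2 * x) t + count (fun x => 2 * x < G) t + count (fun x => 2 * x == G) t)%N.
Proof.
elim: t => //= x t ->.
case: (ltngtP G (2 * x)) => H /=; lia.
Qed.

Lemma part2 (n : nat) (T : pred nat) (g : int) :
     numerical_semigroup T -> is_frob T g ->
     card_eq (Lset T g) (2 * n)%N ->
     exists (S A : pred nat),
       [/\ ns_symmetric S, is_frob S g,
           (forall x : nat, A x -> [&& (S x), (g < (2 * x)%N%:Z) & (x%:Z < g)]),
           card_eq A n
         & forall x : nat, T x = setminus S A x].
Proof.
move=> nsT Tg [s [us ms ss]].
have T0 : T 0%N by case: nsT.
have [_ [Tadd [m Tm]]] := nsT.
case: (frob_cases T0 Tg) => [[gE allT]|[G [gE H1 H2]]].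
  have s0 : s = [::].
    case: s us ms ss => [|a s'] // _ ms _; move: (ms a).
    by rewrite mem_head /Lset allT.
  have n0 : n = 0%N by move: ss; rewrite s0 /=; lia.
  exists T, pred0; split => //.
  - split.
      split => //; move=> [S1 [S2 [_ _ [_ [x /andP[_ Tx]]] _ _]]].
      by move: Tx; rewrite allT.
    move=> f Hf; case: (frob_cases T0 Hf) => [[-> _]|[G [_ _ H]]] //.
    by move: H; rewrite allT.
  - by exists [::]; rewrite n0.
  - by move=> x; rewrite /setminus /= andbT.
subst g.
have LP : forall x, (x \in s) = ~~ T x && ~~ T (G - x)%N.
  by move=> x; rewrite ms (Lset_pos x T0 H1 H2).
pose sA := filter (fun x => G < 2 * x)%N s.
pose sB := filter (fun x => 2 * x < G)%N s.
pose sC := filter (fun x => 2 * x == G)%N s.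
have Hsz : size s = (size sA + size sB + size sC)%N by rewrite !size_filter (count3 G).
have le_G : forall x, x \in s -> (x < G)%N.
  move=> x; rewrite LP => /andP[Tx TGx].
  have := gap_le H1 Tx; rewrite leq_eqVlt => /orP[/eqP E|//].
  by move: TGx; rewrite E subnn T0.
have AB : (size sA <= size sB)%N.
  rewrite -(size_map (fun x => G - x)%N).
  apply: uniq_leq_size.
    rewrite map_inj_in_uniq ?filter_uniq //.
    move=> x y; rewrite !mem_filter => /andP[_ xs] /andP[_ ys] E.
    by rewrite -(subKn (ltnW (le_G _ xs))) E subKn // ltnW // le_G.
  move=> y /mapP[x]; rewrite mem_filter => /andP[hx xs] ->.
  have xG := le_G _ xs.
  rewrite mem_filter LP (subKn (ltnW xG)).
  move: xs; rewrite LP => /andP[a b]; rewrite a b andbT.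
  move: hx xG; lia.
have BA : (size sB <= size sA)%N.
  rewrite -(size_map (fun x => G - x)%N).
  apply: uniq_leq_size.
    rewrite map_inj_in_uniq ?filter_uniq //.
    move=> x y; rewrite !mem_filter => /andP[_ xs] /andP[_ ys] E.
    by rewrite -(subKn (ltnW (le_G _ xs))) E subKn // ltnW // le_G.
  move=> y /mapP[x]; rewrite mem_filter => /andP[hx xs] ->.
  have xG := le_G _ xs.
  rewrite mem_filter LP (subKn (ltnW xG)).
  move: xs; rewrite LP => /andP[a b]; rewrite a b andbT.
  move: hx xG; lia.
have C1 : (size sC <= 1)%N.
  apply: (@uniq_leq_size _ sC [:: (G %/ 2)%N]); first by rewrite filter_uniq.
  move=> x; rewrite mem_filter inE => /andP[/eqP E _]; apply/eqP; lia.
have sAn : size sA = n by lia.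
have sC0 : sC = [::].
  apply/eqP; rewrite -size_eq0; apply/eqP; move: Hsz ss AB BA C1.
  move: (size sA) (size sB) (size sC) (size s) => a b c d; lia.
have oddG : odd G.
  apply/negPn/negP => eG.
  have [k E] : exists k, G = (2 * k)%N.
    by exists (G %/ 2)%N; rewrite {1}(divn_eq G 2) modn2 (negbTE eG) addn0 mulnC.
  have : k \in sC.
    rewrite mem_filter LP E eqxx /=.
    have -> : (2 * k - k = k)%N by lia.
    rewrite andbb; apply/negP => Th; move: H2.
    by rewrite E mul2n -addnn Tadd.
  by rewrite sC0.
pose A := fun x => [&& ~~ T x, ~~ T (G - x)%N & (G < 2 * x)%N].
pose S := fun x => T x || A x.
have SG1 : forall x, (G < x)%N -> S x by move=> x /H1; rewrite /S => ->.
have SG2 : ~~ S G by rewrite /S /A (negbTE H2) subnn T0.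
have Ssym : forall x, (x <= G)%N -> ~~ S x -> S (G - x)%N.
  move=> x xG; rewrite /S /A negb_or => /andP[Tx nA].
  case TGx : (T (G - x)%N) => //=.
  rewrite subKn // Tx /=.
  move: nA; rewrite Tx TGx /= -leqNgt => h.
  have : (2 * x != G)%N by apply/eqP => E; move: oddG; rewrite -E mul2n odd_double.
  move: h xG; lia.
have nsS : numerical_semigroup S.
  split; first by rewrite /S T0.
  split; last by exists m => x /Tm; rewrite /S => ->.
  have key : forall x y, A x -> T y -> S (x + y)%N.
    move=> x y /and3P[Tx TGx Gx] Ty.
    case: y Ty => [|y] Ty; first by rewrite addn0 /S /A Tx TGx Gx orbT.
    rewrite /S; case E: (T (x + y.+1)%N) => //=.
    rewrite /A E /=.
    have le : (x + y.+1 <= G)%N by apply: (gap_le H1); rewrite E.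
    apply/andP; split; last by lia.
    apply/negP => T3; move: TGx.
    have -> : (G - x = (G - (x + y.+1)) + y.+1)%N by lia.
    by rewrite Tadd.
  move=> x y; rewrite {1 2}/S => /orP[Tx|Ax] /orP[Ty|Ay].
  - by rewrite /S Tadd.
  - by rewrite addnC key.
  - by rewrite key.
  - apply: SG1; move: Ax Ay => /and3P[_ _ a] /and3P[_ _ b]; lia.
exists S, A; split.
- split; first exact: sym_irr nsS SG1 SG2 Ssym.
  move=> f Hf; have S0 : S 0%N by case: nsS.
  by rewrite (frob_eq S0 Hf SG1 SG2).
- exact: frob_pos.
- move=> x Ax; rewrite !ltz_nat /S Ax orbT /=.
  move: Ax => /and3P[Tx TGx Gx]; rewrite Gx /=.
  have := gap_le H1 Tx; rewrite leq_eqVlt => /orP[/eqP E|//].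
  by move: TGx; rewrite E subnn T0.
- exists sA; split.
  + by rewrite filter_uniq.
  + by move=> x; rewrite mem_filter LP /A andbC -andbA.
  + exact: sAn.
- move=> x; rewrite /setminus /S; case Tx: (T x) => //=.
    by rewrite /A Tx.
  by rewrite andbN.
Qed.

Unset Implicit Arguments. Set Strict Implicit.

Theorem proposition19 (n : nat) :
  (forall (S A : pred nat) (f : int),
     ns_symmetric S -> is_frob S f ->
     (forall x : nat, A x -> [&& (S x), (f < (2 * x)%N%:Z) & (x%:Z < f)]) ->
     card_eq A n ->
     numerical_semigroup (setminus S A) ->
     forall g : int, is_frob (setminus S A) g ->
       card_eq (Lset (setminus S A) g) (2 * n)%N)
  /\
  (forall (T : pred nat) (g : int),
     numerical_semigroup T -> is_frob T g ->
     card_eq (Lset T g) (2 * n)%N ->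
     exists (S A : pred nat),
       [/\ ns_symmetric S, is_frob S g,
           (forall x : nat, A x -> [&& (S x), (g < (2 * x)%N%:Z) & (x%:Z < g)]),
           card_eq A n
         & forall x : nat, T x = setminus S A x]).
Proof.
split; [exact: part1 | exact: part2].
Qed.
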